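(* Let $N\ge1$, $h=\frac{2\pi}{2N+1}$, $x_\nu=\nu h$ ($\nu=0,\dots,2N$), and let $u_N(x,t)=\sum_{|k|\le N}\widehat u_k(t)e^{ikx}$ solve the $2/3$ de-aliasing pseudo-spectral Fourier method for Burgers' equation, $$\partial_t u_N(x,t)+\tfrac12\partial_x\Big(I_N\big[(\mathcal S u_N)^2\big]\Big)(x,t)=0,\qquad x\in[0,2\pi),$$ where $\mathcal S u_N:=\sum_{|k|\le \frac23 N}\sigma_k\widehat u_k(t)e^{ikx}$. Then the smoothed solution $u_m:=\mathcal S u_N$ (a trigonometric polynomial of degree $m:=\frac23N$) satisfies $$\partial_t u_m(x,t)+\tfrac12\partial_x\,\mathcal S[u_m^2](x,t)=0,$$ where for a $2\pi$-periodic $w$, $\mathcal S w=\sum_{|k|\le m}\sigma_k\widehat w_k e^{ikx}$.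
   Context: $I_N[w]$ denotes the trigonometric interpolant of degree $N$ of a $2\pi$-periodic function $w$ at the $2N+1$ equispaced points $x_\nu$: $I_N[w](x)=\sum_{|k|\le N}\widetilde w(k)e^{ikx}$ with $\widetilde w(k)=\frac{h}{2\pi}\sum_{\nu=0}^{2N}w(x_\nu)e^{-ikx_\nu}$. The smoothing factors satisfy $\sigma_k\in[0,1]$, $\sigma_k=1$ for $|k|\le N/3$, and $\sigma_k=0$ for $|k|>\frac23N$ (e.g. $\sigma_k=\sigma(|k|/N)$ with a smooth mollifier $\sigma\equiv1$ on $[0,\frac13]$, $\sigma\in(0,1)$ on $(\frac13,\frac23)$, $\sigma\equiv0$ on $[\frac23,1]$). $\widehat w_k$ denotes the $k$-th Fourier coefficient. *)

(* Defs.v *)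
From Stdlib Require Import Reals ZArith.
From Coquelicot Require Import Coquelicot.
Export Complex.

Open Scope R_scope.

Definition cexpi (k : Z) (x : R) : C := (cos (IZR k * x), sin (IZR k * x)).

Definition sumZN (N : nat) (f : Z -> C) : C :=
  sum_n (fun j : nat => f (Z.of_nat j - Z.of_nat N)%Z) (2 * N).

Definition hN (N : nat) : R := 2 * PI / INR (2 * N + 1).
Definition xnode (N : nat) (nu : nat) : R := INR nu * hN N.

Definition dcoef (N : nat) (w : R -> C) (k : Z) : C :=
  scal (hN N / (2 * PI))
    (sum_n (fun nu : nat => (w (xnode N nu) * cexpi (- k) (xnode N nu))%C) (2 * N)).

Definition interpN (N : nat) (w : R -> C) (x : R) : C :=
  sumZN N (fun k => (dcoef N w k * cexpi k x)%C).

Definition fcoef (w : R -> C) (k : Z) : C :=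
  scal (/ (2 * PI))
    ((RInt (fun x => Re (w x * cexpi (- k) x)%C) 0 (2 * PI),
      RInt (fun x => Im (w x * cexpi (- k) x)%C) 0 (2 * PI)) : C).

Definition smoothing_factors (N : nat) (sigma : Z -> R) : Prop :=
  (forall k, 0 <= sigma k <= 1) /\
  (forall k, 3 * IZR (Z.abs k) <= INR N -> sigma k = 1) /\
  (forall k, 3 * IZR (Z.abs k) > 2 * INR N -> sigma k = 0).

Definition in_m (N : nat) (k : Z) : bool :=
  (3 * Z.abs k <=? 2 * Z.of_nat N)%Z.

Definition smoothS (N : nat) (sigma : Z -> R) (w : R -> C) (x : R) : C :=
  sumZN N (fun k => if in_m N k then (RtoC (sigma k) * fcoef w k * cexpi k x)%C
                     else 0%C).

Definition uNfun (N : nat) (uhat : Z -> R -> C) (x t : R) : C :=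
  sumZN N (fun k => (uhat k t * cexpi k x)%C).

Definition Su (N : nat) (sigma : Z -> R) (uhat : Z -> R -> C) (x t : R) : C :=
  sumZN N (fun k => if in_m N k then (RtoC (sigma k) * uhat k t * cexpi k x)%C
                     else 0%C).

Definition burgers_eq_at (v : R -> R -> C) (F : R -> R -> C) (x t : R) : Prop :=
  exists a b : C,
    is_derive (fun s => v x s) t a /\
    is_derive (fun y => F y t) x b /\
    (a + RtoC (/ 2) * b)%C = 0%C.

(* Main.v *)
Require Import Defs.
From Stdlib Require Import Reals ZArith Lia Lra IndefiniteDescription.
From Coquelicot Require Import Coquelicot.
Ltac unf := repeat progress (unfold minus, plus, scal, mult, zero, opp, one, prod_plus, prod_scal, prod_opp, prod_zero, Cmult, Cplus, Copp, RtoC in *; simpl in *).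
Ltac unfg := repeat progress (unfold minus, plus, scal, mult, zero, opp, one, prod_plus, prod_scal, prod_opp, prod_zero, Cmult, Cplus, Copp, RtoC; simpl).
Ltac ceq := unfg; try apply injective_projections; unfg; try field; try ring; try (pose proof PI_RGT_0; lra).
Lemma normC (z : C) : @norm R_AbsRing C_R_NormedModule z = Cmod z.
Proof. unfold norm; simpl. unfold prod_norm, Cmod; simpl. unfold norm; simpl. unfold abs; simpl.
f_equal. rewrite !Rmult_1_r, <- !Rabs_mult, !Rabs_right; try apply Rle_ge, Rle_0_sqr; reflexivity. Qed.
Lemma lin_multc (c : C) : @is_linear R_AbsRing C_R_NormedModule C_R_NormedModule (fun z : C => (z * c)%C).
Proof.
apply Build_is_linear.
- intros. ceq.
- intros. ceq.
- exists (1 + Cmod c). split. pose proof (Cmod_ge_0 c); lra.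
  intros x. rewrite !normC, Cmod_mult. pose proof (Cmod_ge_0 c); pose proof (Cmod_ge_0 x); nra.
Qed.

Definition Cik (k : Z) : C := (0, IZR k).

Lemma deriv_mulr (f : R -> C) x a c :
  @is_derive R_AbsRing C_R_NormedModule f x a ->
  @is_derive R_AbsRing C_R_NormedModule (fun y => (f y * c)%C) x (a * c)%C.
Proof.
unfold is_derive; intros H.
eapply filterdiff_ext_lin.
apply (filterdiff_comp' f (fun z => (z*c)%C) x _ _ H (filterdiff_linear _ (lin_multc c))).
intros; simpl; ceq.
Qed.

Lemma deriv_mull (f : R -> C) x a c :
  @is_derive R_AbsRing C_R_NormedModule f x a ->
  @is_derive R_AbsRing C_R_NormedModule (fun y => (c * f y)%C) x (c * a)%C.
Proof.
intros H. rewrite Cmult_comm. eapply is_derive_ext. 2: apply deriv_mulr, H.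
intros; apply Cmult_comm.
Qed.

Lemma deriv_cexpi k x :
  @is_derive R_AbsRing C_R_NormedModule (fun y => cexpi k y) x (Cik k * cexpi k x)%C.
Proof.
assert (H1 : is_derive (fun y => cos (IZR k * y)) x (- IZR k * sin (IZR k * x))).
{ auto_derive; auto. ring. }
assert (H2 : is_derive (fun y => sin (IZR k * y)) x (IZR k * cos (IZR k * x))).
{ auto_derive; auto. ring. }
pose proof (@is_derive_scal_l R_AbsRing C_R_NormedModule _ x _ ((1,0):C) H1) as D1.
pose proof (@is_derive_scal_l R_AbsRing C_R_NormedModule _ x _ ((0,1):C) H2) as D2.
pose proof (is_derive_plus _ _ _ _ _ D1 D2) as D.
eapply is_derive_ext with (f := fun y => plus (scal (cos (IZR k * y)) ((1,0):C)) (scal (sin (IZR k * y)) ((0,1):C))).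
{ intros t; unfold cexpi; ceq. }
replace (Cik k * cexpi k x)%C with (plus (scal (- IZR k * sin (IZR k * x)) ((1,0):C)) (scal (IZR k * cos (IZR k * x)) ((0,1):C))).
exact D.
unfold Cik, cexpi; ceq.
Qed.

Lemma cexpi_mul k l x : (cexpi k x * cexpi l x)%C = cexpi (k + l) x.
Proof. unfold cexpi. rewrite plus_IZR, Rmult_plus_distr_r, cos_plus, sin_plus.
ceq. Qed.

Lemma cexpi_add k a b : cexpi k (a + b) = (cexpi k a * cexpi k b)%C.
Proof. unfold cexpi. rewrite Rmult_plus_distr_l, cos_plus, sin_plus. ceq. Qed.

Lemma deriv_trig M c x :
  @is_derive R_AbsRing C_R_NormedModule (fun y => sumZN M (fun k => (c k * cexpi k y)%C)) x
    (sumZN M (fun k => (c k * (Cik k * cexpi k x))%C)).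
Proof.
unfold sumZN.
apply (is_derive_sum_n (fun j y => (c (Z.of_nat j - Z.of_nat M)%Z * cexpi (Z.of_nat j - Z.of_nat M)%Z y)%C)).
intros; apply deriv_mull, deriv_cexpi.
Qed.

Lemma deriv_fst (f : R -> C) x l :
  @is_derive R_AbsRing C_R_NormedModule f x l -> is_derive (fun y => fst (f y)) x (fst l).
Proof.
unfold is_derive; intros H.
eapply filterdiff_ext_lin.
apply (filterdiff_comp' f (fun z : C_R_NormedModule => fst z) x _ _ H (filterdiff_linear _ (@is_linear_fst R_AbsRing R_NormedModule R_NormedModule))).
intros; simpl. reflexivity.
Qed.

Lemma deriv_snd (f : R -> C) x l :
  @is_derive R_AbsRing C_R_NormedModule f x l -> is_derive (fun y => snd (f y)) x (snd l).
Proof.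
unfold is_derive; intros H.
eapply filterdiff_ext_lin.
apply (filterdiff_comp' f (fun z : C_R_NormedModule => snd z) x _ _ H (filterdiff_linear _ (@is_linear_snd R_AbsRing R_NormedModule R_NormedModule))).
intros; simpl. reflexivity.
Qed.

Lemma deriv_unique (f : R -> C) x l1 l2 :
  @is_derive R_AbsRing C_R_NormedModule f x l1 ->
  @is_derive R_AbsRing C_R_NormedModule f x l2 -> l1 = l2.
Proof.
intros H1 H2.
apply injective_projections.
- apply deriv_fst, is_derive_unique in H1. apply deriv_fst, is_derive_unique in H2. congruence.
- apply deriv_snd, is_derive_unique in H1. apply deriv_snd, is_derive_unique in H2. congruence.
Qed.

Lemma sum_zero_loc (g : nat -> C) n : (forall i, (i <= n)%nat -> g i = 0%C) -> sum_n g n = zero.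
Proof.
intros H. induction n. rewrite sum_O. apply H; lia.
rewrite sum_Sn, IHn by (intros; apply H; lia). rewrite H by lia. ceq.
Qed.

Lemma sum_pick (g : nat -> C) n i0 :
  (i0 <= n)%nat -> (forall i, (i <= n)%nat -> i <> i0 -> g i = 0%C) -> sum_n g n = g i0.
Proof.
intros Hi Hg. induction n.
- assert (i0 = 0%nat) by lia. subst. apply sum_O.
- destruct (Nat.eq_dec i0 (S n)).
  + subst. rewrite sum_Sn.
    rewrite sum_zero_loc by (intros; apply Hg; lia). ceq.
  + rewrite sum_Sn, IHn by (try lia; intros; apply Hg; lia). rewrite (Hg (S n)) by lia. ceq.
Qed.

Lemma sum_zero (g : nat -> C) n : (forall i, g i = 0%C) -> sum_n g n = zero.
Proof. intros H. apply sum_zero_loc; auto. Qed.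

Lemma sumZN_pick M (g : Z -> C) k :
  (Z.abs k <= Z.of_nat M)%Z -> (forall p, p <> k -> g p = 0%C) -> sumZN M g = g k.
Proof.
intros Hk Hg. unfold sumZN.
rewrite (sum_pick _ _ (Z.to_nat (k + Z.of_nat M))).
- f_equal. lia.
- lia.
- intros i _ Hi. apply Hg. lia.
Qed.

Definition Dsum (N : nat) (m : Z) : C :=
  scal (hN N / (2 * PI)) (sum_n (fun nu => cexpi m (xnode N nu)) (2 * N)).

Lemma dcoef_term N c m k :
  dcoef N (fun x => (c * cexpi m x)%C) k = (c * Dsum N (m - k))%C.
Proof.
unfold dcoef, Dsum.
rewrite (sum_n_ext _ (fun nu => mult c (cexpi (m-k) (xnode N nu)))).
2:{ intros; rewrite <- Cmult_assoc, cexpi_mul. replace (m + - k)%Z with (m-k)%Z by ring. reflexivity. }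
rewrite sum_n_mult_l. set (s := sum_n _ (2 * N)). clearbody s. ceq.
Qed.

Lemma cexpi_2PI m : cexpi m (2 * PI) = RtoC 1.
Proof.
unfold cexpi.
assert (Hs : sin (IZR m * PI) = 0) by (apply sin_eq_0_1; exists m; ring).
apply injective_projections; simpl.
- replace (IZR m * (2 * PI)) with (2 * (IZR m * PI)) by ring.
  rewrite cos_2a_sin, Hs. ring.
- apply sin_eq_0_1. exists (2 * m)%Z. rewrite mult_IZR. simpl. ring.
Qed.

Lemma INR_pos N : 0 < INR (2 * N + 1).
Proof. apply lt_0_INR. lia. Qed.

Lemma hN_full N : INR (2 * N + 1) * hN N = 2 * PI.
Proof. unfold hN. pose proof (INR_pos N). field. lra. Qed.

Lemma Dsum_0 N : Dsum N 0 = RtoC 1.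
Proof.
unfold Dsum.
assert (H : forall n, sum_n (fun nu => cexpi 0 (xnode N nu)) n = (INR (S n), 0)).
{ induction n. rewrite sum_O. unfold cexpi; simpl. rewrite Rmult_0_l, cos_0, sin_0. reflexivity.
  rewrite sum_Sn, IHn. unfold cexpi. simpl IZR. rewrite Rmult_0_l, cos_0, sin_0.
  rewrite (S_INR (S n)). generalize (INR (S n)). intros r. ceq. }
rewrite H. replace (S (2 * N)) with (2 * N + 1)%nat by lia.
unfold hN. pose proof (INR_pos N). pose proof PI_RGT_0.
apply injective_projections; unf; field; lra.
Qed.

Lemma sum_shift (f : nat -> C) n :
  plus (f 0%nat) (sum_n (fun nu => f (S nu)) n) = sum_n f (S n).
Proof.
induction n.
- rewrite sum_O, sum_Sn, sum_O. reflexivity.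
- rewrite sum_Sn, (sum_Sn f (S n)), <- IHn. rewrite plus_assoc. reflexivity.
Qed.

Lemma sin_half_nz th : 0 < Rabs th < 2 * PI -> cos th <> 1.
Proof.
intros [H1 H2] Hc.
replace th with (2 * (th / 2)) in Hc by field.
rewrite cos_2a_sin in Hc.
assert (Hs : sin (th/2) * sin (th/2) = 0) by lra.
apply Rmult_integral in Hs.
assert (sin (th / 2) <> 0).
{ destruct (Rle_or_lt 0 th).
  - rewrite Rabs_right in H1, H2 by lra. apply Rgt_not_eq, sin_gt_0; lra.
  - rewrite Rabs_left in H1, H2 by lra.
    replace (th/2) with (- (- th / 2)) by field. rewrite sin_neg.
    assert (0 < sin (- th / 2)) by (apply sin_gt_0; lra). lra. }
destruct Hs; contradiction.
Qed.

Lemma Dsum_nz N m : (m <> 0)%Z -> (Z.abs m <= 2 * Z.of_nat N)%Z -> Dsum N m = RtoC 0.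
Proof.
intros Hm Hb. unfold Dsum.
set (S := sum_n (fun nu => cexpi m (xnode N nu)) (2 * N)).
set (w := cexpi m (hN N)).
assert (HS : (w * S)%C = S).
{ unfold S. rewrite <- (sum_n_mult_l w).
  rewrite (sum_n_ext _ (fun nu => cexpi m (xnode N (Datatypes.S nu)))).
  2:{ intros nu. unfold w, xnode. rewrite S_INR, <- cexpi_add. f_equal. ring. }
  assert (E1 : cexpi m (xnode N (Datatypes.S (2 * N))) = RtoC 1).
  { unfold xnode. replace (Datatypes.S (2*N)) with (2*N+1)%nat by lia. rewrite hN_full. apply cexpi_2PI. }
  assert (E0 : cexpi m (xnode N 0) = RtoC 1).
  { unfold xnode, cexpi. simpl. rewrite Rmult_0_l, Rmult_0_r, cos_0, sin_0. reflexivity. }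
  pose proof (sum_shift (fun nu => cexpi m (xnode N nu)) (2 * N)) as E.
  rewrite sum_Sn in E. cbv beta in E. rewrite E1, E0 in E.
  revert E. generalize (sum_n (fun nu => cexpi m (xnode N (Datatypes.S nu))) (2 * N)).
  generalize (sum_n (fun nu => cexpi m (xnode N nu)) (2 * N)).
  intros [a b] [c d] E. unf. injection E; intros. apply injective_projections; simpl; lra. }
assert (Hw : fst w <> 1).
{ unfold w, cexpi; simpl. apply sin_half_nz.
  assert (Hr : 1 <= Rabs (IZR m) <= INR (2 * N)).
  { rewrite <- abs_IZR, INR_IZR_INZ. split; apply IZR_le; lia. }
  pose proof (INR_pos N). pose proof PI_RGT_0.
  rewrite Rabs_mult. unfold hN. rewrite (Rabs_right (2 * PI / _)).
  2:{ apply Rle_ge, Rlt_le. apply Rdiv_lt_0_compat; lra. }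
  assert (INR (2 * N + 1) = INR (2 * N) + 1) by (rewrite plus_INR; simpl; ring).
  set (d := INR (2 * N + 1)) in *. set (r := Rabs (IZR m)) in *.
  replace (r * (2 * PI / d)) with ((r / d) * (2 * PI)) by (field; lra).
  assert (0 < r / d < 1). { split. apply Rdiv_lt_0_compat; lra. apply Rmult_lt_reg_r with d; [lra|]. unfold Rdiv; rewrite Rmult_assoc, Rinv_l, Rmult_1_r, Rmult_1_l; lra. }
  nra. }
assert (S = RtoC 0).
{ destruct S as [s1 s2]. destruct w as [a b]. unfold Cmult in HS. simpl in *.
  injection HS; intros E2 E1.
  assert (Hp : 0 < (a - 1) * (a - 1) + b * b) by (assert (a - 1 <> 0) by lra; nra).
  assert (Q1 : s1 * ((a - 1) * (a - 1) + b * b) = 0).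
  { replace (s1 * ((a - 1) * (a - 1) + b * b)) with ((a-1)*(a * s1 - b * s2 - s1) + b*(a * s2 + b * s1 - s2)) by ring. rewrite E1, E2. ring. }
  assert (Q2 : s2 * ((a - 1) * (a - 1) + b * b) = 0).
  { replace (s2 * ((a - 1) * (a - 1) + b * b)) with ((a-1)*(a * s2 + b * s1 - s2) - b*(a * s1 - b * s2 - s1)) by ring. rewrite E1, E2. ring. }
  apply Rmult_integral in Q1. apply Rmult_integral in Q2.
  apply injective_projections; simpl; lra. }
rewrite H. ceq.
Qed.

Lemma dcoef_ext N f g k : (forall x, f x = g x) -> dcoef N f k = dcoef N g k.
Proof. intros H. unfold dcoef. f_equal. apply sum_n_ext. intros; rewrite H; auto. Qed.

Lemma dcoef_plus N f g k :
  dcoef N (fun x => (f x + g x)%C) k = (dcoef N f k + dcoef N g k)%C.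
Proof.
unfold dcoef.
rewrite (sum_n_ext _ (fun nu => plus (f (xnode N nu) * cexpi (- k) (xnode N nu))%C
                                     (g (xnode N nu) * cexpi (- k) (xnode N nu))%C)).
2:{ intros; apply Cmult_plus_distr_r. }
rewrite sum_n_plus. set (s1 := sum_n _ (2 * N)). set (s2 := sum_n _ (2 * N)). clearbody s1 s2. ceq.
Qed.

Lemma dcoef_scal N c f k :
  dcoef N (fun x => (c * f x)%C) k = (c * dcoef N f k)%C.
Proof.
unfold dcoef.
rewrite (sum_n_ext _ (fun nu => mult c (f (xnode N nu) * cexpi (- k) (xnode N nu))%C)).
2:{ intros; unfold mult; simpl; rewrite Cmult_assoc; reflexivity. }
rewrite sum_n_mult_l. set (s := sum_n _ (2 * N)). clearbody s. ceq.
Qed.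

Lemma dcoef_zero N k : dcoef N (fun _ => RtoC 0) k = RtoC 0.
Proof.
rewrite (dcoef_ext N _ (fun x => (RtoC 0 * RtoC 0)%C)) by (intros; ceq).
rewrite dcoef_scal. ceq.
Qed.

Lemma dcoef_sum N (F : nat -> R -> C) n k :
  dcoef N (fun x => sum_n (fun i => F i x) n) k = sum_n (fun i => dcoef N (F i) k) n.
Proof.
induction n.
- rewrite sum_O. apply dcoef_ext. intros; apply sum_O.
- rewrite sum_Sn, <- IHn, <- dcoef_plus. apply dcoef_ext. intros; rewrite sum_Sn; reflexivity.
Qed.

Lemma dcoef_trig N c k : (Z.abs k <= Z.of_nat N)%Z ->
  dcoef N (fun y => sumZN N (fun p => (c p * cexpi p y)%C)) k = c k.
Proof.
intros Hk. unfold sumZN.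
rewrite (dcoef_sum N (fun i y => (c (Z.of_nat i - Z.of_nat N)%Z * cexpi (Z.of_nat i - Z.of_nat N)%Z y)%C)).
rewrite (sum_n_ext _ (fun i => (c (Z.of_nat i - Z.of_nat N)%Z * Dsum N ((Z.of_nat i - Z.of_nat N) - k))%C)).
2:{ intros; apply dcoef_term. }
rewrite (sum_pick _ _ (Z.to_nat (k + Z.of_nat N))).
- replace (Z.of_nat (Z.to_nat (k + Z.of_nat N)) - Z.of_nat N)%Z with k by lia.
  replace (k - k)%Z with 0%Z by ring. rewrite Dsum_0. ceq.
- lia.
- intros i Hi Hne. rewrite Dsum_nz by lia. ceq.
Qed.

Definition Good (N : nat) (j : Z) (w : R -> C) : Prop :=
  ex_RInt (fun x => Re (w x * cexpi (- j) x)%C) 0 (2 * PI) /\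
  ex_RInt (fun x => Im (w x * cexpi (- j) x)%C) 0 (2 * PI) /\
  fcoef w j = dcoef N w j.

Lemma Good_ext N j w w' : (forall x, w x = w' x) -> Good N j w -> Good N j w'.
Proof.
intros H [H1 [H2 H3]]. split; [|split].
- eapply ex_RInt_ext; [|exact H1]. intros; simpl; rewrite H; auto.
- eapply ex_RInt_ext; [|exact H2]. intros; simpl; rewrite H; auto.
- rewrite <- (dcoef_ext N w w' j H), <- H3. unfold fcoef.
  f_equal. f_equal; apply RInt_ext; intros; rewrite H; auto.
Qed.

Lemma Good_plus N j w1 w2 : Good N j w1 -> Good N j w2 -> Good N j (fun x => (w1 x + w2 x)%C).
Proof.
intros [A1 [B1 C1]] [A2 [B2 C2]].
assert (ER : forall x, Re ((w1 x + w2 x) * cexpi (- j) x)%C = (Re (w1 x * cexpi (- j) x)%C + Re (w2 x * cexpi (- j) x)%C)%R).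
{ intros; rewrite Cmult_plus_distr_r; reflexivity. }
assert (EI : forall x, Im ((w1 x + w2 x) * cexpi (- j) x)%C = (Im (w1 x * cexpi (- j) x)%C + Im (w2 x * cexpi (- j) x)%C)%R).
{ intros; rewrite Cmult_plus_distr_r; reflexivity. }
split; [|split].
- eapply ex_RInt_ext; [intros; symmetry; apply ER|]. exact (@ex_RInt_plus R_NormedModule _ _ _ _ A1 A2).
- eapply ex_RInt_ext; [intros; symmetry; apply EI|]. exact (@ex_RInt_plus R_NormedModule _ _ _ _ B1 B2).
- rewrite dcoef_plus, <- C1, <- C2. unfold fcoef.
  rewrite (RInt_ext _ _ _ _ (fun x _ => ER x)), (RInt_ext _ _ _ _ (fun x _ => EI x)).
  assert (RA : RInt (fun x => (Re (w1 x * cexpi (- j) x)%C + Re (w2 x * cexpi (- j) x)%C)%R) 0 (2*PI)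
     = (RInt (fun x => Re (w1 x * cexpi (- j) x)%C) 0 (2*PI) + RInt (fun x => Re (w2 x * cexpi (- j) x)%C) 0 (2*PI))%R)
    by exact (@RInt_plus R_CompleteNormedModule _ _ _ _ A1 A2).
  assert (RB : RInt (fun x => (Im (w1 x * cexpi (- j) x)%C + Im (w2 x * cexpi (- j) x)%C)%R) 0 (2*PI)
     = (RInt (fun x => Im (w1 x * cexpi (- j) x)%C) 0 (2*PI) + RInt (fun x => Im (w2 x * cexpi (- j) x)%C) 0 (2*PI))%R)
    by exact (@RInt_plus R_CompleteNormedModule _ _ _ _ B1 B2).
  rewrite RA, RB.
  set (a1 := RInt _ 0 (2 * PI)). set (a2 := RInt _ 0 (2 * PI)). set (a3 := RInt _ 0 (2 * PI)). set (a4 := RInt _ 0 (2 * PI)).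
  clearbody a1 a2 a3 a4. ceq.
Qed.

Lemma Good_sum N j (F : nat -> R -> C) n :
  (forall i, (i <= n)%nat -> Good N j (F i)) -> Good N j (fun x => sum_n (fun i => F i x) n).
Proof.
intros H. induction n.
- eapply Good_ext; [|apply (H 0%nat); lia]. intros; rewrite sum_O; auto.
- eapply Good_ext; [|apply Good_plus; [apply IHn; intros; apply H; lia | apply (H (S n)); lia]].
  intros; rewrite sum_Sn; reflexivity.
Qed.

Lemma re_form c m j x :
  Re (c * cexpi m x * cexpi (- j) x)%C = (fst c * cos (IZR (m - j) * x) - snd c * sin (IZR (m - j) * x))%R.
Proof. rewrite <- Cmult_assoc, cexpi_mul. replace (m + - j)%Z with (m - j)%Z by ring. reflexivity. Qed.

Lemma im_form c m j x :
  Im (c * cexpi m x * cexpi (- j) x)%C = (fst c * sin (IZR (m - j) * x) + snd c * cos (IZR (m - j) * x))%R.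
Proof. rewrite <- Cmult_assoc, cexpi_mul. replace (m + - j)%Z with (m - j)%Z by ring. simpl. ring. Qed.

Lemma trig_int a b q :
  q <> 0 ->
  is_RInt (fun x => (a * cos (q * x) - b * sin (q * x))%R) 0 (2 * PI)
     (minus ((a * sin (q * (2 * PI)) + b * cos (q * (2 * PI))) / q) ((a * sin (q * 0) + b * cos (q * 0)) / q))
  /\
  is_RInt (fun x => (a * sin (q * x) + b * cos (q * x))%R) 0 (2 * PI)
     (minus ((b * sin (q * (2 * PI)) - a * cos (q * (2 * PI))) / q) ((b * sin (q * 0) - a * cos (q * 0)) / q)).
Proof.
intros Hq. split.
- apply (is_RInt_derive (fun x => (a * sin (q * x) + b * cos (q * x)) / q)).
  + intros x _. auto_derive; auto. field. auto.
  + intros x _. apply (@ex_derive_continuous R_AbsRing R_NormedModule). auto_derive; auto.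
- apply (is_RInt_derive (fun x => (b * sin (q * x) - a * cos (q * x)) / q)).
  + intros x _. auto_derive; auto. field. auto.
  + intros x _. apply (@ex_derive_continuous R_AbsRing R_NormedModule). auto_derive; auto.
Qed.

Lemma Good_term N j c m : (Z.abs (m - j) <= 2 * Z.of_nat N)%Z ->
  Good N j (fun x => (c * cexpi m x)%C).
Proof.
intros Hb. unfold Good.
assert (Hd : dcoef N (fun x => (c * cexpi m x)%C) j = (c * Dsum N (m - j))%C) by apply dcoef_term.
destruct (Z.eq_dec m j) as [E|E].
- subst j. replace (m - m)%Z with 0%Z in * by ring.
  assert (ER : forall x, Re (c * cexpi m x * cexpi (- m) x)%C = fst c).
  { intros; rewrite re_form; replace (m-m)%Z with 0%Z by ring; simpl; rewrite Rmult_0_l, cos_0, sin_0; ring. }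
  assert (EI : forall x, Im (c * cexpi m x * cexpi (- m) x)%C = snd c).
  { intros; rewrite im_form; replace (m-m)%Z with 0%Z by ring; simpl; rewrite Rmult_0_l, cos_0, sin_0; ring. }
  assert (IR : is_RInt (fun x => Re (c * cexpi m x * cexpi (- m) x)%C) 0 (2*PI) (scal (2*PI - 0) (fst c))).
  { eapply is_RInt_ext; [|apply (@is_RInt_const R_NormedModule)]. intros x _; cbv beta; symmetry; apply ER. }
  assert (II : is_RInt (fun x => Im (c * cexpi m x * cexpi (- m) x)%C) 0 (2*PI) (scal (2*PI - 0) (snd c))).
  { eapply is_RInt_ext; [|apply (@is_RInt_const R_NormedModule)]. intros x _; cbv beta; symmetry; apply EI. }
  split; [eexists; exact IR|split; [eexists; exact II|]].
  rewrite Hd, Dsum_0. unfold fcoef. rewrite (is_RInt_unique _ _ _ _ IR), (is_RInt_unique _ _ _ _ II).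
  ceq.
- assert (Hq : IZR (m - j) <> 0) by (apply not_0_IZR; lia).
  destruct (trig_int (fst c) (snd c) _ Hq) as [T1 T2].
  pose proof (cexpi_2PI (m - j)) as E2. unfold cexpi in E2.
  assert (Ec : cos (IZR (m - j) * (2 * PI)) = 1) by (apply (f_equal fst) in E2; exact E2).
  assert (Es : sin (IZR (m - j) * (2 * PI)) = 0) by (apply (f_equal snd) in E2; exact E2).
  rewrite Ec, Es, !Rmult_0_r, sin_0, cos_0 in T1, T2.
  match type of T1 with is_RInt _ _ _ ?v => replace v with 0 in T1 by (unf; field; auto) end.
  match type of T2 with is_RInt _ _ _ ?v => replace v with 0 in T2 by (unf; field; auto) end.
  assert (IR : is_RInt (fun x => Re (c * cexpi m x * cexpi (- j) x)%C) 0 (2*PI) 0).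
  { eapply is_RInt_ext; [|apply T1]. intros x _; symmetry; apply re_form. }
  assert (II : is_RInt (fun x => Im (c * cexpi m x * cexpi (- j) x)%C) 0 (2*PI) 0).
  { eapply is_RInt_ext; [|apply T2]. intros x _; symmetry; apply im_form. }
  split; [eexists; exact IR|split; [eexists; exact II|]].
  rewrite Hd, Dsum_nz by lia. unfold fcoef. rewrite (is_RInt_unique _ _ _ _ IR), (is_RInt_unique _ _ _ _ II).
  ceq.
Qed.

Lemma in_m_bound N k : in_m N k = true -> (3 * Z.abs k <= 2 * Z.of_nat N)%Z.
Proof. unfold in_m. intros H. apply Z.leb_le in H. exact H. Qed.

Lemma alias N (A : Z -> C) j : in_m N j = true ->
  let f := fun z => sumZN N (fun p => if in_m N p then (A p * cexpi p z)%C else RtoC 0) in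
  fcoef (fun z => (f z * f z)%C) j = dcoef N (fun z => (f z * f z)%C) j.
Proof.
intros Hj f. apply in_m_bound in Hj.
set (g := fun i z => if in_m N (Z.of_nat i - Z.of_nat N)%Z
                      then (A (Z.of_nat i - Z.of_nat N)%Z * cexpi (Z.of_nat i - Z.of_nat N)%Z z)%C else RtoC 0).
assert (G : Good N j (fun z => sum_n (fun i => sum_n (fun i' => (g i z * g i' z)%C) (2 * N)) (2 * N))).
{ apply (Good_sum N j (fun i z => sum_n (fun i' => (g i z * g i' z)%C) (2 * N))). intros i Hi.
  apply (Good_sum N j (fun i' z => (g i z * g i' z)%C)). intros i' Hi'.
  unfold g. set (p := (Z.of_nat i - Z.of_nat N)%Z). set (q := (Z.of_nat i' - Z.of_nat N)%Z).
  destruct (in_m N p) eqn:Ep; destruct (in_m N q) eqn:Eq.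
  - apply in_m_bound in Ep. apply in_m_bound in Eq.
    apply (Good_ext N j (fun z => (A p * A q * cexpi (p + q) z)%C)).
    { intros z. rewrite <- cexpi_mul. set (e1 := cexpi p z). set (e2 := cexpi q z). clearbody e1 e2.
      set (a1 := A p). set (a2 := A q). clearbody a1 a2. ceq. }
    apply Good_term. lia.
  - apply (Good_ext N j (fun z => (RtoC 0 * cexpi 0 z)%C)). { intros z. ceq. } apply Good_term. lia.
  - apply (Good_ext N j (fun z => (RtoC 0 * cexpi 0 z)%C)). { intros z. ceq. } apply Good_term. lia.
  - apply (Good_ext N j (fun z => (RtoC 0 * cexpi 0 z)%C)). { intros z. ceq. } apply Good_term. lia. }
assert (G2 : Good N j (fun z => (f z * f z)%C)).
{ eapply Good_ext; [|exact G]. intros z.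
  transitivity (sum_n (fun i => mult (g i z) (sum_n (fun i' => g i' z) (2 * N))) (2 * N)).
  - apply sum_n_ext; intros; exact (sum_n_mult_l _ _ _).
  - exact (sum_n_mult_r (sum_n (fun i' => g i' z) (2 * N)) (fun i => g i z) (2 * N)). }
apply G2.
Qed.

Lemma half_solve (a b : C) : (a + RtoC (/ 2) * b)%C = 0%C -> a = (RtoC (- / 2) * b)%C.
Proof.
destruct a as [a1 a2], b as [b1 b2]. intros E. unf. injection E; intros.
apply injective_projections; simpl; lra.
Qed.

Lemma smoothS_form N sigma w y :
  smoothS N sigma w y = sumZN N (fun k => ((if in_m N k then (RtoC (sigma k) * fcoef w k)%C else RtoC 0) * cexpi k y)%C).
Proof.
unfold smoothS, sumZN. apply sum_n_ext. intros i.
destruct (in_m N _); [reflexivity|]. set (e := cexpi _ y). clearbody e. ceq.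
Qed.

Lemma sum_combine (f g : nat -> C) n c :
  (forall i, (i <= n)%nat -> (f i + c * g i)%C = 0%C) -> (sum_n f n + c * sum_n g n)%C = 0%C.
Proof.
intros H. induction n.
- rewrite !sum_O. apply H; lia.
- rewrite !sum_Sn.
  assert (IH : (sum_n f n + c * sum_n g n)%C = 0%C) by (apply IHn; intros; apply H; lia).
  assert (H1 := H (S n) (le_n _)).
  revert IH H1. generalize (sum_n f n) (sum_n g n) (f (S n)) (g (S n)). intros a b d e IH H1.
  replace (plus a d + c * plus b e)%C with ((a + c * b) + (d + c * e))%C by ceq.
  rewrite IH, H1. ceq.
Qed.

Theorem corollary3p2 (N : nat) (sigma : Z -> R) (uhat : Z -> R -> C) :
  (1 <= N)%nat ->
  smoothing_factors N sigma ->
  forall t : R,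
    (forall x : R,
       burgers_eq_at (uNfun N uhat)
         (fun y s => interpN N (fun z => (Su N sigma uhat z s * Su N sigma uhat z s)%C) y)
         x t) ->
    forall x : R,
      burgers_eq_at (Su N sigma uhat)
        (fun y s => smoothS N sigma (fun z => (Su N sigma uhat z s * Su N sigma uhat z s)%C) y)
        x t.
Proof.
intros HN Hs t H x.
set (wt := fun z => (Su N sigma uhat z t * Su N sigma uhat z t)%C).
set (B := fun y => sumZN N (fun k => (dcoef N wt k * (Cik k * cexpi k y))%C)).
assert (HB : forall y, @is_derive R_AbsRing C_R_NormedModule (fun y => interpN N wt y) y (B y)).
{ intros y. exact (deriv_trig N (fun k => dcoef N wt k) y). }
assert (H' : forall y, exists a, @is_derive R_AbsRing C_R_NormedModule (fun s => uNfun N uhat y s) t a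
                          /\ a = (RtoC (- / 2) * B y)%C).
{ intros y. destruct (H y) as [a [b [Ha [Hb E]]]]. exists a. split; auto.
  apply half_solve. rewrite (deriv_unique _ _ _ _ (HB y) Hb). exact E. }
set (A := fun y => proj1_sig (constructive_indefinite_description _ (H' y))).
assert (HA : forall y, @is_derive R_AbsRing C_R_NormedModule (fun s => uNfun N uhat y s) t (A y)
                 /\ A y = (RtoC (- / 2) * B y)%C).
{ intros y. unfold A. destruct (constructive_indefinite_description _ (H' y)) as [a Ha]. exact Ha. }
assert (Hu : forall k, (Z.abs k <= Z.of_nat N)%Z ->
          @is_derive R_AbsRing C_R_NormedModule (fun s => uhat k s) t (dcoef N A k)).
{ intros k Hk.
  apply (is_derive_ext (fun s => (RtoC (hN N/(2*PI)) * sum_n (fun nu => uNfun N uhat (xnode N nu) s * cexpi (-k) (xnode N nu)) (2*N))%C)).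
  { intros s. rewrite <- (dcoef_trig N (fun p => uhat p s) k Hk). unfold dcoef, uNfun.
    set (S := sum_n _ (2 * N)). clearbody S. ceq. }
  replace (dcoef N A k) with (RtoC (hN N/(2*PI)) * sum_n (fun nu => A (xnode N nu) * cexpi (-k) (xnode N nu)) (2*N))%C.
  2:{ unfold dcoef. set (S := sum_n _ (2 * N)). clearbody S. ceq. }
  apply deriv_mull.
  apply (is_derive_sum_n (fun nu s => (uNfun N uhat (xnode N nu) s * cexpi (-k) (xnode N nu))%C)).
  intros nu _. apply deriv_mulr. apply HA. }
assert (HDA : forall k, (Z.abs k <= Z.of_nat N)%Z -> dcoef N A k = (RtoC (- / 2) * (dcoef N wt k * Cik k))%C).
{ intros k Hk. rewrite (dcoef_ext N A (fun y => RtoC (- / 2) * B y)%C) by (intros; apply HA).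
  rewrite dcoef_scal. f_equal.
  rewrite (dcoef_ext N B (fun y => sumZN N (fun p => (dcoef N wt p * Cik p) * cexpi p y)%C)).
  - apply dcoef_trig; auto.
  - intros y. unfold B, sumZN. apply sum_n_ext. intros; apply Cmult_assoc. }
assert (HAL : forall k, in_m N k = true -> fcoef wt k = dcoef N wt k).
{ intros k Hk.
  assert (Ew : wt = (fun z => (sumZN N (fun p => if in_m N p then ((RtoC (sigma p) * uhat p t) * cexpi p z)%C else RtoC 0) *
                              sumZN N (fun p => if in_m N p then ((RtoC (sigma p) * uhat p t) * cexpi p z)%C else RtoC 0))%C)) by reflexivity.
  rewrite Ew. exact (alias N (fun p => (RtoC (sigma p) * uhat p t)%C) k Hk). }
exists (sumZN N (fun k => if in_m N k then (RtoC (sigma k) * dcoef N A k * cexpi k x)%C else RtoC 0)).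
exists (sumZN N (fun k => ((if in_m N k then (RtoC (sigma k) * fcoef wt k)%C else RtoC 0) * (Cik k * cexpi k x))%C)).
split; [|split].
- unfold Su, sumZN.
  apply (is_derive_sum_n (fun i s => if in_m N (Z.of_nat i - Z.of_nat N)%Z
      then (RtoC (sigma (Z.of_nat i - Z.of_nat N)%Z) * uhat (Z.of_nat i - Z.of_nat N)%Z s * cexpi (Z.of_nat i - Z.of_nat N)%Z x)%C else RtoC 0)).
  intros i Hi. destruct (in_m N (Z.of_nat i - Z.of_nat N)%Z).
  + apply deriv_mulr, deriv_mull, Hu. lia.
  + exact (is_derive_const _ _).
- apply (is_derive_ext (fun y => sumZN N (fun k => ((if in_m N k then (RtoC (sigma k) * fcoef wt k)%C else RtoC 0) * cexpi k y)%C))).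
  { intros y. symmetry. apply smoothS_form. }
  apply deriv_trig.
- unfold sumZN. apply sum_combine. intros i Hi.
  set (k := (Z.of_nat i - Z.of_nat N)%Z).
  destruct (in_m N k) eqn:E.
  + rewrite HDA by (apply in_m_bound in E; lia). rewrite <- HAL by auto.
    set (F := fcoef wt k). set (e := cexpi k x). clearbody F e. unfold Cik. ceq.
  + set (e := cexpi k x). clearbody e. unfold Cik. ceq.
Qed.
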